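(* Let $n=2$, $K\in\{-1,0,1\}$, and let $k>0$ satisfy $k^2>\max(0,2K)$. Then $-\Delta_{{}^2g}+V_{S,k}$ has trivial $L^2$-kernel on $(\mathbb R^2,{}^2g)$, where, with $m=k^2-2K$, $$V_{S,k}(r)=\frac13\Big(\frac{6\mu}{r^3}+\frac{m}{r^2}+\frac{2m^2(m+3K)+216\mu^2/\ell^2}{(6\mu+mr)^2}\Big).$$
   Context: Fix constants $\ell>0$, $\mu\in\mathbb R$. Set $f(r)=\frac{r^2}{\ell^2}+K-\frac{2\mu}{r}$ (the case $n=2$). Assume $\mu>0$ if $K\in\{0,1\}$ and $\mu>\mu_{\min}:=-\frac{\ell}{3\sqrt3}$ if $K=-1$; let $r_0>0$ be the largest zero of $f$ (simple; $f>0,f'>0$ on $(r_0,\infty)$). Let ${}^2g=f(r)dt^2+f(r)^{-1}dr^2$ on $\mathbb R^2$, with $r\in[r_0,\infty)$, $t$ periodic of period $4\pi/f'(r_0)$, $(r,t)$ polar-type coordinates centred at $r=r_0$ (a smooth complete metric); $\Delta_{{}^2g}=\nabla^a\nabla_a$ on functions. *)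

(* Defs.v *)
From Stdlib Require Import Reals Lra.
Open Scope R_scope.

Definition fS (l K mu r : R) : R := r ^ 2 / l ^ 2 + K - 2 * mu / r.
Definition fSp (l mu r : R) : R := 2 * r / l ^ 2 + 2 * mu / r ^ 2.

Definition VSk (l K mu k r : R) : R :=
  let m := k ^ 2 - 2 * K in
  / 3 * (6 * mu / r ^ 3 + m / r ^ 2
         + (2 * m ^ 2 * (m + 3 * K) + 216 * mu ^ 2 / l ^ 2) / (6 * mu + m * r) ^ 2).

Definition cont2 (F : R -> R -> R) : Prop :=
  forall x y eps, 0 < eps -> exists d, 0 < d /\
    forall x' y', Rabs (x' - x) < d -> Rabs (y' - y) < d ->
      Rabs (F x' y' - F x y) < eps.

Fixpoint Ck2 (k : nat) (F : R -> R -> R) : Prop :=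
  cont2 F /\
  match k with
  | O => True
  | S k' => exists Fx Fy : R -> R -> R,
      (forall x y, derivable_pt_lim (fun a => F a y) x (Fx x y)) /\
      (forall x y, derivable_pt_lim (fun b => F x b) y (Fy x y)) /\
      Ck2 k' Fx /\ Ck2 k' Fy
  end.

Definition smooth2 (F : R -> R -> R) : Prop := forall k, Ck2 k F.

Definition is_integral (g : R -> R) (a b I : R) : Prop :=
  exists pr : Riemann_integrable g a b, RiemannInt pr = I.

(* The function in (r,t) coordinates attached to a function F on R^2 given in
   Cartesian coordinates of the smooth structure: the polar radius is
   sqrt(r - r0) and the polar angle is theta = 2 pi t / beta = (f'(r0)/2) t,
   beta = 4 pi / f'(r0) being the period of t. *)
Definition polar_rt (r0 c : R) (F : R -> R -> R) (r t : R) : R :=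
  F (sqrt (r - r0) * cos (c * t)) (sqrt (r - r0) * sin (c * t)).

(* Main.v *)
Require Import Defs.
From Stdlib Require Import Reals.
Open Scope R_scope.
From Stdlib Require Import Lra Psatz.
From Coquelicot Require Import Coquelicot.
Open Scope R_scope.

(* Proof via an S-deformation (Riccati) energy argument. *)

Lemma cont2_2d F : cont2 F -> forall x y, continuity_2d_pt F x y.
Proof. intros H x y eps. destruct (H x y eps (cond_pos eps)) as [d [dp Hd]].
  exists (mkposreal d dp). intros u v Hu Hv. apply Hd; assumption. Qed.

Lemma c2_comp (F g1 g2 : R -> R -> R) x y :
  continuity_2d_pt F (g1 x y) (g2 x y) -> continuity_2d_pt g1 x y -> continuity_2d_pt g2 x y ->
  continuity_2d_pt (fun u v => F (g1 u v) (g2 u v)) x y.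
Proof.
  intros HF H1 H2 eps. destruct (HF eps) as [d Hd].
  destruct (H1 d) as [d1 Hd1]. destruct (H2 d) as [d2 Hd2].
  exists (mkposreal (Rmin d1 d2) (Rmin_pos _ _ (cond_pos d1) (cond_pos d2))).
  intros u v Hu Hv; simpl in *. apply Hd.
  - apply Hd1; eapply Rlt_le_trans; eauto; apply Rmin_l.
  - apply Hd2; eapply Rlt_le_trans; eauto; apply Rmin_r.
Qed.

Lemma c2_fst (h : R -> R) x y : continuity_pt h x -> continuity_2d_pt (fun u _ => h u) x y.
Proof. intro H. apply (continuity_1d_2d_pt_comp h (fun u _ => u)); auto. apply continuity_2d_pt_id1. Qed.
Lemma c2_snd (h : R -> R) x y : continuity_pt h y -> continuity_2d_pt (fun _ v => h v) x y.
Proof. intro H. apply (continuity_1d_2d_pt_comp h (fun _ v => v)); auto. apply continuity_2d_pt_id2. Qed.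

Lemma mvt_between (f f' : R -> R) a b :
  (forall z, derivable_pt_lim f z (f' z)) ->
  exists c, Rabs (c - a) <= Rabs (b - a) /\ f b - f a = f' c * (b - a).
Proof.
  intros D. destruct (Rtotal_order a b) as [Hab|[Hab|Hab]].
  - destruct (MVT_cor2 f f' a b Hab (fun c _ => D c)) as [c [E Hc]].
    exists c; split; auto. rewrite !Rabs_right; lra.
  - subst. exists b. split. lra. ring.
  - destruct (MVT_cor2 f f' b a Hab (fun c _ => D c)) as [c [E Hc]].
    exists c; split. rewrite !Rabs_left1; lra. lra.
Qed.

Lemma C1_diff F Fx Fy :
  (forall x y, derivable_pt_lim (fun a => F a y) x (Fx x y)) ->
  (forall x y, derivable_pt_lim (fun b => F x b) y (Fy x y)) ->
  (forall x y, continuity_2d_pt Fx x y) -> (forall x y, continuity_2d_pt Fy x y) ->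
  forall x y, differentiable_pt_lim F x y (Fx x y) (Fy x y).
Proof.
  intros dx dy cx cy x y eps.
  destruct (cx x y (pos_div_2 eps)) as [d1 H1]. destruct (cy x y (pos_div_2 eps)) as [d2 H2].
  exists (mkposreal (Rmin d1 d2) (Rmin_pos _ _ (cond_pos d1) (cond_pos d2))).
  intros u v Hu Hv; simpl in Hu, Hv.
  destruct (mvt_between (fun a => F a v) (fun a => Fx a v) x u (fun z => dx z v)) as [c1 [Hc1 E1]].
  destruct (mvt_between (fun b => F x b) (fun b => Fy x b) y v (fun z => dy x z)) as [c2 [Hc2 E2]].
  simpl in E1, E2.
  assert (Hm1 := Rmin_l d1 d2). assert (Hm2 := Rmin_r d1 d2).
  assert (A1: Rabs (Fx c1 v - Fx x y) < eps/2) by (apply H1; lra).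
  assert (A2: Rabs (Fy x c2 - Fy x y) < eps/2).
  { apply H2. rewrite Rminus_eq_0, Rabs_R0. apply cond_pos. lra. }
  replace (F u v - F x y - (Fx x y * (u - x) + Fy x y * (v - y))) with
    ((Fx c1 v - Fx x y) * (u - x) + (Fy x c2 - Fy x y) * (v - y)).
  2:{ replace (F u v - F x y) with ((F u v - F x v) + (F x v - F x y)) by ring.
      rewrite E1, E2. ring. }
  eapply Rle_trans. apply Rabs_triang. rewrite !Rabs_mult.
  assert (B1 : Rabs (Fx c1 v - Fx x y) * Rabs (u - x) <= eps/2 * Rmax (Rabs (u - x)) (Rabs (v - y))).
  { apply Rmult_le_compat; try apply Rabs_pos; try lra. apply Rmax_l. }
  assert (B2 : Rabs (Fy x c2 - Fy x y) * Rabs (v - y) <= eps/2 * Rmax (Rabs (u - x)) (Rabs (v - y))).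
  { apply Rmult_le_compat; try apply Rabs_pos; try lra. apply Rmax_r. }
  lra.
Qed.

Lemma c2_to_cont_snd (g : R -> R -> R) x y : continuity_2d_pt g x y -> continuous (fun t => g x t) y.
Proof.
  intros H P [eps HP]. destruct (H eps) as [d Hd]. exists d. intros t Ht. apply HP.
  apply Hd. rewrite Rminus_eq_0, Rabs_R0; apply cond_pos. exact Ht.
Qed.

Lemma c2_to_cont_fst (g : R -> R -> R) x y : continuity_2d_pt g x y -> continuous (fun t => g t y) x.
Proof.
  intros H P [eps HP]. destruct (H eps) as [d Hd]. exists d. intros t Ht. apply HP.
  apply Hd. exact Ht. rewrite Rminus_eq_0, Rabs_R0; apply cond_pos.
Qed.

Lemma cont_eps (g : R -> R) x : continuous g x -> forall eps, 0 < eps ->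
  exists d, 0 < d /\ forall y, Rabs (y - x) < d -> Rabs (g y - g x) < eps.
Proof.
  intros H eps He. destruct (H (fun z => Rabs (z - g x) < eps)) as [d Hd].
  { exists (mkposreal eps He). intros z Hz. exact Hz. }
  exists d. split. apply cond_pos. intros y Hy. apply Hd. exact Hy.
Qed.

Lemma param_deriv (g dg : R -> R -> R) a b r0 r : r0 < r ->
  (forall y t, r0 < y -> is_derive (fun z => g z t) y (dg y t)) ->
  (forall y t, r0 < y -> continuity_2d_pt dg y t) ->
  (forall y t, r0 < y -> continuity_2d_pt g y t) ->
  is_derive (fun y => RInt (fun t => g y t) a b) r (RInt (fun t => dg r t) a b).
Proof.
  intros Hr D Cd Cg.
  assert (Hloc: locally r (fun y => r0 < y)) by exact (open_gt r0 r Hr).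
  replace (RInt (fun t => dg r t) a b) with (RInt (fun t => Derive (fun u => g u t) r) a b).
  - apply is_derive_RInt_param.
    + apply (filter_imp (fun y => r0 < y)); auto. intros y Hy t _. eexists; apply D; auto.
    + intros t _. apply continuity_2d_pt_ext_loc with (f := dg).
      * exists (mkposreal (r - r0) ltac:(lra)). intros u v Hu Hv. simpl in Hu.
        symmetry. apply is_derive_unique, D. apply Rabs_def2 in Hu. lra.
      * apply Cd; auto.
    + apply (filter_imp (fun y => r0 < y)); auto. intros y Hy.
      apply (@ex_RInt_continuous R_CompleteNormedModule). intros z _. apply c2_to_cont_snd, Cg; auto.
  - apply RInt_ext. intros; apply is_derive_unique, D; auto.
Qed.

Lemma RInt_zero_pos (g : R -> R) a b t0 : a < t0 < b ->
  (forall t, continuous g t) -> (forall t, a <= t <= b -> 0 <= g t) ->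
  is_RInt g a b 0 -> g t0 = 0.
Proof.
  intros Ht C Pos I.
  destruct (Rle_lt_or_eq_dec 0 (g t0) (Pos t0 ltac:(lra))) as [Hg|Hg]; [|auto].
  exfalso.
  destruct (cont_eps g t0 (C t0) (g t0 / 2) ltac:(lra)) as [d [Hd Hdd]].
  set (h := Rmin d (Rmin (t0 - a) (b - t0)) / 2).
  assert (Hh1 : 0 < h). { unfold h.
     assert (0 < Rmin d (Rmin (t0 - a) (b - t0))) by (apply Rmin_glb_lt; [lra| apply Rmin_glb_lt; lra]). lra. }
  assert (Hh2 : h < d). { unfold h. assert (Rmin d (Rmin (t0 - a) (b - t0)) <= d) by apply Rmin_l. lra. }
  assert (Hh3 : h < t0 - a /\ h < b - t0). { unfold h.
     assert (Rmin d (Rmin (t0 - a) (b - t0)) <= Rmin (t0 - a) (b - t0)) by apply Rmin_r.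
     assert (Rmin (t0 - a) (b - t0) <= t0 - a) by apply Rmin_l.
     assert (Rmin (t0 - a) (b - t0) <= b - t0) by apply Rmin_r. lra. }
  assert (Ex : forall x y, ex_RInt g x y). { intros x y; apply (@ex_RInt_continuous R_CompleteNormedModule); intros z _; apply C. }
  assert (I1 := RInt_correct g a (t0 - h) (Ex _ _)).
  assert (I2 := RInt_correct g (t0 - h) (t0 + h) (Ex _ _)).
  assert (I3 := RInt_correct g (t0 + h) b (Ex _ _)).
  assert (I123 := is_RInt_Chasles _ _ _ _ _ _ (is_RInt_Chasles _ _ _ _ _ _ I1 I2) I3).
  assert (E := is_RInt_unique _ _ _ _ I123). rewrite (is_RInt_unique _ _ _ _ I) in E.
  assert (P1 : 0 <= RInt g a (t0 - h)).
  { apply (is_RInt_ge_0 g a (t0 - h)); auto; try lra. intros; apply Pos; lra. }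
  assert (P3 : 0 <= RInt g (t0 + h) b).
  { apply (is_RInt_ge_0 g (t0 + h) b); auto; try lra. intros; apply Pos; lra. }
  assert (P2 : (t0 + h - (t0 - h)) * (g t0 / 2) <= RInt g (t0 - h) (t0 + h)).
  { apply (is_RInt_le (fun _ => g t0 / 2) g (t0 - h) (t0 + h)); auto; try lra.
    apply (is_RInt_const (t0 - h) (t0 + h) (g t0 / 2)).
    intros x Hx. assert (Rabs (x - t0) < d) by (apply Rabs_def1; lra).
    specialize (Hdd x H). apply Rabs_def2 in Hdd. lra. }
  change (0 = RInt g a (t0 - h) + RInt g (t0 - h) (t0 + h) + RInt g (t0 + h) b) in E.
  nra.
Qed.

Definition mm K k := k^2 - 2*K.
Definition HH K mu k r := 6*mu + mm K k * r.
Definition ss l K mu k r := -6*mu * fS l K mu r / (r * HH K mu k r).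
Definition ssp l K mu k r := -6*mu * (fSp l mu r * (r * HH K mu k r) - fS l K mu r * (HH K mu k r + r * mm K k)) / (r * HH K mu k r)^2.
Definition dd K mu k r := mm K k * k^2 / (r * HH K mu k r).

Lemma fS_deriv l K mu r : 0 < r -> l <> 0 -> is_derive (fS l K mu) r (fSp l mu r).
Proof. intros Hr Hl. unfold fS, fSp. auto_derive. lra. field. lra. Qed.

Lemma ss_deriv l K mu k r : 0 < r -> l <> 0 -> HH K mu k r <> 0 -> is_derive (ss l K mu k) r (ssp l K mu k r).
Proof. intros Hr Hl HH0. unfold ss, ssp.
  apply (is_derive_ext (fun r => -6*mu * fS l K mu r * / (r * (6*mu + mm K k * r)))).
  { intros; unfold HH; reflexivity. }
  assert (D := fS_deriv l K mu r Hr Hl).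
  auto_derive.
  - split. exists (fSp l mu r). exact D. split; auto. unfold HH in HH0. 
    apply Rmult_integral_contrapositive; split; lra.
  - replace (Derive (fun x => fS l K mu x) r) with (fSp l mu r) by (symmetry; apply is_derive_unique; exact D). unfold HH. field. unfold HH in HH0; split; lra.
Qed.

Lemma riccati l K mu k r : 0 < r -> l <> 0 -> HH K mu k r <> 0 -> fS l K mu r <> 0 ->
  VSk l K mu k r + ssp l K mu k r - (ss l K mu k r)^2 / fS l K mu r = dd K mu k r.
Proof. intros Hr Hl HH0 Hf. unfold VSk, ssp, ss, dd, HH in *. unfold mm in *. unfold fSp. 
  unfold fS in *. cbv zeta. field. split; [auto|split; [lra|split; [auto|]]].
  intro E. apply Hf. replace (r ^ 2 / l ^ 2 + K - 2 * mu / r) with (((r ^ 2 + K * l ^ 2) * r - 2 * mu * l ^ 2) / (r * l^2)) by (field; lra).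
  rewrite E. unfold Rdiv. ring. Qed.

Lemma r0_big l mu r0 : 0 < l -> mu < 0 -> - l / (3 * sqrt 3) < mu -> 0 < r0 -> 
  (forall r, 0 < r -> fS l (-1) mu r = 0 -> r <= r0) -> l / sqrt 3 < r0.
Proof.
  intros Hl Hmu Hmu2 Hr0 Hmax.
  assert (H3 : 0 < sqrt 3) by (apply sqrt_lt_R0; lra).
  assert (H33 : sqrt 3 * sqrt 3 = 3) by (apply sqrt_sqrt; lra).
  assert (H31 : 1 < sqrt 3). { rewrite <- sqrt_1. apply sqrt_lt_1; lra. }
  set (s := l / sqrt 3) in *.
  assert (Hs : 0 < s) by (unfold s; apply Rdiv_lt_0_compat; lra).
  assert (Hs2 : s * s * 3 = l * l). { unfold s. replace (l / sqrt 3 * (l / sqrt 3) * 3) with (l * l * 3 / (sqrt 3 * sqrt 3)) by (field; lra). rewrite H33. field. }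
  assert (Hmu3 : - s / 3 < mu). { replace (- s / 3) with (- l / (3 * sqrt 3)) by (unfold s; field; lra). exact Hmu2. }
  set (g := fun r => r^3 / l^2 - r - 2 * mu).
  assert (Cg : continuity g) by (unfold g; reg).
  assert (Hsl : s < l + 1). { unfold s. apply Rlt_trans with l; [|lra]. apply (Rmult_lt_reg_r (sqrt 3)); auto. unfold Rdiv. rewrite Rmult_assoc, Rinv_l; nra. }
  assert (g1 : g s < 0). { unfold g. assert (El : l^2 = 3 * s^2) by nra. rewrite El. replace (s^3 / (3 * s^2)) with (s / 3) by (field; lra). lra. }

  assert (g2 : 0 < g (l + 1)). { unfold g. assert (0 < (l+1)^3 / l^2 - (l + 1)).
    { replace ((l+1)^3 / l^2 - (l + 1)) with ((l+1) * (2*l + 1) / l^2) by (field; lra).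
      apply Rdiv_lt_0_compat; nra. } lra. }
  destruct (IVT g s (l + 1) Cg Hsl g1 g2) as [z [Hz Ez]].
  assert (Hzs : s < z). { destruct (Rle_lt_or_eq_dec s z) as [E|E]; try lra. subst z. lra. }
  assert (z <= r0). { apply Hmax. lra. unfold fS. unfold g in Ez.
     replace (z ^ 2 / l ^ 2 + -1 - 2 * mu / z) with ((z ^ 3 / l ^ 2 - z - 2 * mu) / z) by (field; lra).
     rewrite Ez. unfold Rdiv; ring. }
  lra.
Qed.

Lemma fS_factor l K mu r0 r : 0 < l -> 0 < r0 -> 0 < r -> fS l K mu r0 = 0 ->
  fS l K mu r = (r - r0) * ((r + r0) / l^2 + 2 * mu / (r * r0)).
Proof. intros Hl Hr0 Hr E. unfold fS in *.
  assert (EK : K = 2 * mu / r0 - r0^2 / l^2) by lra. rewrite EK. field. lra. Qed.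

Section P.
Variables (l mu K r0 k : R).
Hypothesis (hl : 0 < l)
  (hK : K = -1 \/ K = 0 \/ K = 1)
  (hmu01 : K = 0 \/ K = 1 -> 0 < mu)
  (hmum1 : K = -1 -> - l / (3 * sqrt 3) < mu)
  (hr0pos : 0 < r0)
  (hr0zero : fS l K mu r0 = 0)
  (hr0max : forall r, 0 < r -> fS l K mu r = 0 -> r <= r0)
  (hk : 0 < k)
  (hk2 : Rmax 0 (2 * K) < k ^ 2).

Lemma neg_case : mu < 0 -> K = -1 /\ - r0 / 3 < mu.
Proof. intros Hmu.
  assert (K = -1). { destruct hK as [E|E]; auto. exfalso. specialize (hmu01 E). lra. }
  split; auto. subst K.
  assert (Hb := r0_big l mu r0 hl Hmu (hmum1 eq_refl) hr0pos hr0max).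
  assert (H3 : 0 < sqrt 3) by (apply sqrt_lt_R0; lra).
  assert (E : - l / (3 * sqrt 3) = - (l / sqrt 3) / 3) by (field; lra).
  specialize (hmum1 eq_refl). lra.
Qed.

Lemma m_pos : 2 * K < k^2.
Proof. eapply Rle_lt_trans; [apply Rmax_r|exact hk2]. Qed.

Lemma c_pos : 0 < fSp l mu r0.
Proof. unfold fSp. destruct (Rlt_or_le mu 0) as [Hmu|Hmu].
  - destruct (neg_case Hmu) as [EK _]. subst K.
    assert (Hb := r0_big l mu r0 hl Hmu (hmum1 eq_refl) hr0pos hr0max).
    assert (H3 : 0 < sqrt 3) by (apply sqrt_lt_R0; lra).
    assert (H33 : sqrt 3 * sqrt 3 = 3) by (apply sqrt_sqrt; lra).
    assert (Hl3 : l * l < 3 * (r0 * r0)).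
    { assert (E : l * l = (l / sqrt 3) * (l / sqrt 3) * (sqrt 3 * sqrt 3)) by (field; lra).
      rewrite H33 in E. rewrite E.
      assert (0 < l / sqrt 3) by (apply Rdiv_lt_0_compat; lra). nra. }
    unfold fS in hr0zero.
    assert (Emu : 2 * mu = r0 * (r0^2 / l^2 - 1)).
    { assert (E2 : 2 * mu / r0 = r0 ^ 2 / l ^ 2 - 1) by lra.
      rewrite <- E2. field. lra. }
    replace (2 * mu / r0 ^ 2) with ((r0^2/l^2 - 1) / r0) by (rewrite Emu; field; lra).
    replace (2 * r0 / l ^ 2 + (r0 ^ 2 / l ^ 2 - 1) / r0) with ((3 * (r0 * r0) - l * l) / (l^2 * r0)) by (field; lra).
    apply Rdiv_lt_0_compat; [lra| apply Rmult_lt_0_compat; [apply pow_lt|]; lra].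
  - assert (0 < 2 * r0 / l^2) by (apply Rdiv_lt_0_compat; nra).
    assert (0 <= 2 * mu / r0^2) by (apply Rle_mult_inv_pos; nra). lra.
Qed.

Lemma f_pos r : r0 < r -> 0 < fS l K mu r.
Proof. intros Hr. rewrite (fS_factor l K mu r0 r); try lra.
  apply Rmult_lt_0_compat; [lra|].
  destruct (Rlt_or_le mu 0) as [Hmu|Hmu].
  - assert (Hc := c_pos). unfold fSp in Hc.
    replace ((r + r0) / l ^ 2 + 2 * mu / (r * r0)) with
      ((2 * r0 / l ^ 2 + 2 * mu / r0 ^ 2) + (r - r0) * (1 / l^2 + (- 2 * mu) / (r * r0^2))) by (field; lra).
    assert (0 < 1 / l^2) by (apply Rdiv_lt_0_compat; nra).
    assert (0 < (- 2 * mu) / (r * r0^2)) by (apply Rdiv_lt_0_compat; [lra| apply Rmult_lt_0_compat; [lra| apply pow_lt; lra]]).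
    nra.
  - assert (0 < (r + r0) / l^2) by (apply Rdiv_lt_0_compat; nra).
    assert (0 <= 2 * mu / (r * r0)) by (apply Rle_mult_inv_pos; nra). lra.
Qed.

Lemma H_pos r : r0 <= r -> 0 < HH K mu k r.
Proof. intros Hr. unfold HH, mm. assert (Hm := m_pos).
  destruct (Rlt_or_le mu 0) as [Hmu|Hmu].
  - destruct (neg_case Hmu) as [EK Hm3]. subst K. nra.
  - nra.
Qed.

Lemma s_bound : exists b, 0 < b /\ forall r, r0 < r -> ss l K mu k r <= b.
Proof.
  destruct (Rlt_or_le mu 0) as [Hmu|Hmu].
  - destruct (neg_case Hmu) as [EK Hm3].
    assert (H0 := H_pos r0 (Rle_refl _)).
    set (kap := HH K mu k r0 / r0).
    assert (Hkap : 0 < kap) by (apply Rdiv_lt_0_compat; lra).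
    set (B := (1 / l^2 - 2 * mu / r0^3) / kap).
    assert (HB0 : 0 < 1 / l^2 - 2 * mu / r0^3).
    { assert (0 < 1 / l^2) by (apply Rdiv_lt_0_compat; nra).
      assert (0 < - 2 * mu / r0^3) by (apply Rdiv_lt_0_compat; [lra| apply pow_lt; lra]).
      unfold Rdiv in *. lra. }
    assert (HB : 0 < B) by (apply Rdiv_lt_0_compat; lra).
    exists (- 6 * mu * B + 1). split. nra.
    intros r Hr.
    assert (Hf := f_pos r Hr). assert (Hh := H_pos r (Rlt_le _ _ Hr)).
    assert (HrH : 0 < r * HH K mu k r) by (apply Rmult_lt_0_compat; lra).
    assert (E1 : ss l K mu k r = - 6 * mu * (fS l K mu r / (r * HH K mu k r))) by (unfold ss; field; lra).
    assert (E2 : fS l K mu r / (r * HH K mu k r) <= B).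
    { apply (Rmult_le_reg_r (r * HH K mu k r)); auto.
      replace (fS l K mu r / (r * HH K mu k r) * (r * HH K mu k r)) with (fS l K mu r) by (field; lra).
      assert (K1 : kap * r^2 <= r * HH K mu k r).
      { assert (D : r * HH K mu k r - kap * r^2 = 6 * mu * r * (r0 - r) / r0) by (unfold kap, HH; field; lra).
        assert (0 <= 6 * mu * r * (r0 - r) / r0).
        { apply Rle_mult_inv_pos; [|lra]. assert (0 <= (-6 * mu) * r * (r - r0)).
          { apply Rmult_le_pos; [apply Rmult_le_pos|]; lra. } nra. }
        lra. }
      assert (K2 : fS l K mu r <= B * kap * r^2).
      { unfold B. replace ((1 / l ^ 2 - 2 * mu / r0 ^ 3) / kap * kap * r ^ 2) with
          (r^2 / l^2 + (- 2 * mu) * (r^2 / r0^3)) by (field; lra).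
        unfold fS. subst K.
        assert (A1 : 1 / r0 <= r^2 / r0^3).
        { replace (r^2 / r0^3) with ((r / r0)^2 * (1 / r0)) by (field; lra).
          assert (1 <= (r / r0)^2). { assert (1 <= r / r0).
            { apply (Rmult_le_reg_r r0); auto. field_simplify; lra. } nra. }
          assert (0 < 1 / r0) by (apply Rdiv_lt_0_compat; lra). nra. }
        assert (A2 : 1 / r <= 1 / r0).
        { apply Rmult_le_reg_r with (r * r0). nra. field_simplify; lra. }
        replace (2 * mu / r) with (2 * mu * (1 / r)) by (field; lra).
        nra. }
      nra. }
    rewrite E1. nra.
  - exists 1. split. lra. intros r Hr.
    assert (Hf := f_pos r Hr). assert (Hh := H_pos r (Rlt_le _ _ Hr)).
    unfold ss. assert (0 <= 6 * mu * fS l K mu r / (r * HH K mu k r)).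
    { apply Rle_mult_inv_pos; [|apply Rmult_lt_0_compat]; nra. }
    replace (-6 * mu * fS l K mu r / (r * HH K mu k r)) with (- (6 * mu * fS l K mu r / (r * HH K mu k r))) by (field; nra).
    lra.
Qed.

Lemma near_bound : exists C, 0 < C /\ forall r, r0 < r <= r0 + 1 ->
  fS l K mu r <= C * (r - r0) /\ Rabs (ss l K mu k r) <= C * (r - r0).
Proof.
  assert (H0 := H_pos r0 (Rle_refl _)).
  set (C1 := (2 * r0 + 1) / l^2 + 2 * Rabs mu / r0^2).
  assert (HC1 : 0 < C1).
  { unfold C1. assert (0 < (2 * r0 + 1) / l^2) by (apply Rdiv_lt_0_compat; nra).
    assert (0 <= 2 * Rabs mu / r0^2) by (apply Rle_mult_inv_pos; [assert (Habs := Rabs_pos mu); lra|apply pow_lt; lra]). lra. }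
  set (C2 := 6 * Rabs mu * C1 / (r0 * HH K mu k r0)).
  assert (HC2 : 0 <= C2) by (apply Rle_mult_inv_pos; [assert (Habs := Rabs_pos mu); nra|nra]).
  exists (C1 + C2). split. lra. intros r Hr.
  assert (Hf := f_pos r (proj1 Hr)). assert (Hh := H_pos r (Rlt_le _ _ (proj1 Hr))).
  assert (Ef : fS l K mu r <= C1 * (r - r0)).
  { rewrite (fS_factor l K mu r0 r); try lra. rewrite Rmult_comm. apply Rmult_le_compat_r; [lra|].
    unfold C1. assert ((r + r0) / l^2 <= (2 * r0 + 1) / l^2).
    { unfold Rdiv. apply Rmult_le_compat_r. left; apply Rinv_0_lt_compat; nra. lra. }
    assert (2 * mu / (r * r0) <= 2 * Rabs mu / r0^2).
    { apply Rle_trans with (2 * Rabs mu / (r * r0)).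
      - unfold Rdiv. apply Rmult_le_compat_r. left; apply Rinv_0_lt_compat; nra.
        assert (Habs := Rle_abs mu). lra.
      - unfold Rdiv. apply Rmult_le_compat_l. assert (Habs := Rabs_pos mu); lra.
        apply Rinv_le_contravar. nra. nra. }
    lra. }
  split. nra.
  assert (Hhr : r0 * HH K mu k r0 <= r * HH K mu k r).
  { assert (Hm := m_pos). apply Rmult_le_compat; try lra. unfold HH, mm. nra. }
  unfold ss. replace (-6 * mu * fS l K mu r / (r * HH K mu k r)) with
     ((-6 * mu) * (fS l K mu r / (r * HH K mu k r))) by (field; nra).
  rewrite Rabs_mult. replace (Rabs (-6 * mu)) with (6 * Rabs mu).
  2:{ rewrite Rabs_mult. replace (Rabs (-6)) with 6. ring. rewrite Rabs_left; lra. }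
  rewrite (Rabs_right (fS l K mu r / (r * HH K mu k r))).
  2:{ left. apply Rdiv_lt_0_compat; nra. }
  assert (fS l K mu r / (r * HH K mu k r) <= C1 * (r - r0) / (r0 * HH K mu k r0)).
  { apply Rle_trans with (C1 * (r - r0) / (r * HH K mu k r)).
    - unfold Rdiv. apply Rmult_le_compat_r. left; apply Rinv_0_lt_compat; nra. lra.
    - unfold Rdiv. apply Rmult_le_compat_l. nra. apply Rinv_le_contravar; nra. }
  assert (6 * Rabs mu * (fS l K mu r / (r * HH K mu k r)) <= C2 * (r - r0)).
  { unfold C2. replace (6 * Rabs mu * C1 / (r0 * HH K mu k r0) * (r - r0)) with
      (6 * Rabs mu * (C1 * (r - r0) / (r0 * HH K mu k r0))) by (field; nra).
    apply Rmult_le_compat_l; auto. assert (Habs := Rabs_pos mu); lra. }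
  nra.
Qed.
End P.

Lemma dmult f g x df dg : derivable_pt_lim f x df -> derivable_pt_lim g x dg ->
  derivable_pt_lim (fun y => f y * g y) x (df * g x + f x * dg).
Proof. intros; apply derivable_pt_lim_mult; auto. Qed.
Lemma dplus f g x df dg : derivable_pt_lim f x df -> derivable_pt_lim g x dg ->
  derivable_pt_lim (fun y => f y + g y) x (df + dg).
Proof. intros; apply derivable_pt_lim_plus; auto. Qed.
Lemma dext f x l l' : derivable_pt_lim f x l -> l = l' -> derivable_pt_lim f x l'.
Proof. intros; subst; auto. Qed.

Ltac c2tac :=
  repeat match goal with
  | |- continuity_2d_pt (fun u v => @?E u) _ _ => apply (c2_fst E)
  | |- continuity_2d_pt (fun u v => @?E v) _ _ => apply (c2_snd E)
  | |- continuity_2d_pt (fun u v => @?A u v + @?B u v) _ _ => apply (continuity_2d_pt_plus A B)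
  | |- continuity_2d_pt (fun u v => @?A u v - @?B u v) _ _ => apply (continuity_2d_pt_minus A B)
  | |- continuity_2d_pt (fun u v => @?A u v * @?B u v) _ _ => apply (continuity_2d_pt_mult A B)
  | |- continuity_2d_pt (fun u v => @?A u v / @?B u v) _ _ =>
       apply (continuity_2d_pt_ext (fun u v => A u v * / B u v)); [intros; reflexivity|]
  | |- continuity_2d_pt (fun u v => - @?A u v) _ _ => apply (continuity_2d_pt_opp A)
  | |- continuity_2d_pt (fun u v => ?G (@?A u v) (@?B u v)) _ _ => apply (c2_comp G A B)
  end.

Lemma c1_of_deriv f x : ex_derive f x -> continuity_pt f x.
Proof. intro H; apply continuity_pt_filterlim; apply (ex_derive_continuous f x H). Qed.
Ltac c1tac := apply c1_of_deriv; auto_derive.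

Section U.
Variables (F Fx Fy Fxx Fxy Fyx Fyy : R -> R -> R) (r0 c : R).
Hypotheses (dFx : forall x y, derivable_pt_lim (fun a => F a y) x (Fx x y))
  (dFy : forall x y, derivable_pt_lim (fun b => F x b) y (Fy x y))
  (dFxx : forall x y, derivable_pt_lim (fun a => Fx a y) x (Fxx x y))
  (dFxy : forall x y, derivable_pt_lim (fun b => Fx x b) y (Fxy x y))
  (dFyx : forall x y, derivable_pt_lim (fun a => Fy a y) x (Fyx x y))
  (dFyy : forall x y, derivable_pt_lim (fun b => Fy x b) y (Fyy x y))
  (cF : forall x y, continuity_2d_pt F x y)
  (cFx : forall x y, continuity_2d_pt Fx x y)
  (cFy : forall x y, continuity_2d_pt Fy x y)
  (cFxx : forall x y, continuity_2d_pt Fxx x y)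
  (cFxy : forall x y, continuity_2d_pt Fxy x y)
  (cFyx : forall x y, continuity_2d_pt Fyx x y)
  (cFyy : forall x y, continuity_2d_pt Fyy x y).

Definition px r t := sqrt (r - r0) * cos (c * t).
Definition py r t := sqrt (r - r0) * sin (c * t).
Definition uu r t := F (px r t) (py r t).
Definition UR r t := (Fx (px r t) (py r t) * cos (c * t) + Fy (px r t) (py r t) * sin (c * t)) / (2 * sqrt (r - r0)).
Definition UT r t := Fx (px r t) (py r t) * (- sqrt (r - r0) * c * sin (c * t))
  + Fy (px r t) (py r t) * (sqrt (r - r0) * c * cos (c * t)).
Definition UTT r t :=
  (Fxx (px r t) (py r t) * (- sqrt (r - r0) * c * sin (c * t)) + Fxy (px r t) (py r t) * (sqrt (r - r0) * c * cos (c * t)))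
     * (- sqrt (r - r0) * c * sin (c * t))
  + Fx (px r t) (py r t) * (- sqrt (r - r0) * c * c * cos (c * t))
  + (Fyx (px r t) (py r t) * (- sqrt (r - r0) * c * sin (c * t)) + Fyy (px r t) (py r t) * (sqrt (r - r0) * c * cos (c * t)))
     * (sqrt (r - r0) * c * cos (c * t))
  + Fy (px r t) (py r t) * (- sqrt (r - r0) * c * c * sin (c * t)).

Lemma dF x y : differentiable_pt_lim F x y (Fx x y) (Fy x y).
Proof. apply C1_diff; auto. Qed.
Lemma dFx2 x y : differentiable_pt_lim Fx x y (Fxx x y) (Fxy x y).
Proof. apply C1_diff; auto. Qed.
Lemma dFy2 x y : differentiable_pt_lim Fy x y (Fyx x y) (Fyy x y).
Proof. apply C1_diff; auto. Qed.

Lemma d_px_r r t : r0 < r -> derivable_pt_lim (fun a => px a t) r (cos (c * t) / (2 * sqrt (r - r0))).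
Proof. intros Hr. apply is_derive_Reals. unfold px. auto_derive. lra. unfold Rminus. field.
  apply Rgt_not_eq, sqrt_lt_R0; lra. Qed.
Lemma d_py_r r t : r0 < r -> derivable_pt_lim (fun a => py a t) r (sin (c * t) / (2 * sqrt (r - r0))).
Proof. intros Hr. apply is_derive_Reals. unfold py. auto_derive. lra. unfold Rminus. field.
  apply Rgt_not_eq, sqrt_lt_R0; lra. Qed.
Lemma d_px_t r t : derivable_pt_lim (fun b => px r b) t (- sqrt (r - r0) * c * sin (c * t)).
Proof. apply is_derive_Reals. unfold px. auto_derive. auto. ring. Qed.
Lemma d_py_t r t : derivable_pt_lim (fun b => py r b) t (sqrt (r - r0) * c * cos (c * t)).
Proof. apply is_derive_Reals. unfold py. auto_derive. auto. ring. Qed.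

Lemma u_r r t : r0 < r -> derivable_pt_lim (fun a => uu a t) r (UR r t).
Proof. intros Hr. unfold uu.
  eapply dext. apply (derivable_pt_lim_comp_2d F (fun a => px a t) (fun a => py a t)).
  apply dF. apply d_px_r; auto. apply d_py_r; auto.
  unfold UR. field. apply Rgt_not_eq, sqrt_lt_R0; lra. Qed.

Lemma u_t r t : derivable_pt_lim (fun b => uu r b) t (UT r t).
Proof. unfold uu.
  eapply dext. apply (derivable_pt_lim_comp_2d F (fun b => px r b) (fun b => py r b)).
  apply dF. apply d_px_t. apply d_py_t.
  unfold UT. ring. Qed.

Lemma UT_t r t : derivable_pt_lim (fun b => UT r b) t (UTT r t).
Proof. unfold UT.
  eapply dext. apply dplus; apply dmult.
  apply (derivable_pt_lim_comp_2d Fx (fun b => px r b) (fun b => py r b)).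
  apply dFx2. apply d_px_t. apply d_py_t.
  apply is_derive_Reals; auto_derive; auto.
  apply (derivable_pt_lim_comp_2d Fy (fun b => px r b) (fun b => py r b)).
  apply dFy2. apply d_px_t. apply d_py_t.
  apply is_derive_Reals; auto_derive; auto.
  unfold UTT. ring. Qed.

Lemma c_u r t : r0 < r -> continuity_2d_pt uu r t.
Proof. intros Hr. unfold uu, px, py. c2tac; auto; c1tac; auto; lra. Qed.
Lemma c_UR r t : r0 < r -> continuity_2d_pt UR r t.
Proof. intros Hr. unfold UR, px, py. c2tac; auto; try (c1tac; auto; lra).
  apply c1_of_deriv; auto_derive. split. lra. split; auto.
  apply Rgt_not_eq. apply Rmult_lt_0_compat. lra. apply sqrt_lt_R0; lra. Qed.
Lemma c_UT r t : r0 < r -> continuity_2d_pt UT r t.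
Proof. intros Hr. unfold UT, px, py. c2tac; auto; c1tac; auto; lra. Qed.
Lemma c_UTT r t : r0 < r -> continuity_2d_pt UTT r t.
Proof. intros Hr. unfold UTT, px, py. c2tac; auto; c1tac; auto; lra. Qed.

End U.

Lemma angle x y : y <> 0 -> exists rho th, 0 < rho /\ 0 < th < 2 * PI /\ x = rho * cos th /\ y = rho * sin th.
Proof.
  intros Hy. set (rho := sqrt (x^2 + y^2)).
  assert (Hr2 : 0 < x^2 + y^2) by (assert (0 < y^2) by (apply pow2_gt_0; auto); nra).
  assert (Hrho : 0 < rho) by (apply sqrt_lt_R0; auto).
  assert (Hrr : rho * rho = x^2 + y^2) by (apply sqrt_sqrt; lra).
  set (z := x / rho).
  assert (Hz2 : z^2 = 1 - (y / rho)^2).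
  { unfold z. replace ((x/rho)^2) with (x^2 / (rho*rho)) by (field; lra).
    replace ((y/rho)^2) with (y^2/(rho*rho)) by (field; lra).
    replace (x^2) with (rho*rho - y^2) by lra. field. lra. }
  assert (Hyr : 0 < (y / rho)^2) by (apply pow2_gt_0; unfold Rdiv; apply Rmult_integral_contrapositive; split; [auto|apply Rinv_neq_0_compat; lra]).
  assert (Hz : -1 < z < 1). { assert (z^2 < 1) by lra. split; nra. }
  assert (Ha := acos_bound z).
  assert (Ha0 : 0 < acos z). { destruct (Rle_lt_or_eq_dec 0 (acos z)) as [E|E]; try lra.
    assert (cos (acos z) = z) by (apply cos_acos; lra). rewrite <- E, cos_0 in H. lra. }
  assert (Hapi : acos z < PI). { destruct (Rle_lt_or_eq_dec (acos z) PI) as [E|E]; try lra.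
    assert (cos (acos z) = z) by (apply cos_acos; lra). rewrite E, cos_PI in H. lra. }
  assert (Hc : cos (acos z) = z) by (apply cos_acos; lra).
  assert (Hs : sin (acos z) = Rabs y / rho).
  { rewrite sin_acos by lra. replace (1 - z²) with ((y/rho)^2) by (unfold Rsqr; replace (z*z) with (z^2) by ring; rewrite Hz2; ring).
    rewrite <- Rsqr_pow2, sqrt_Rsqr_abs. unfold Rdiv. rewrite Rabs_mult, (Rabs_right (/ rho)). auto.
    left; apply Rinv_0_lt_compat; auto. }
  assert (Hpi := PI_RGT_0).
  exists rho. destruct (Rlt_or_le 0 y) as [Hp|Hn].
  - exists (acos z). split; auto. split. lra. split.
    rewrite Hc. unfold z. field. lra. rewrite Hs, Rabs_right by lra. field. lra.
  - exists (2 * PI - acos z). split; auto. split. lra. split.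
    rewrite cos_minus, cos_2PI, sin_2PI, Hc. unfold z. field. lra.
    rewrite sin_minus, cos_2PI, sin_2PI, Hs, Rabs_left by lra. field. lra.
Qed.

Lemma pos_deriv_left (g : R -> R) x d : is_derive g x d -> 0 < d -> forall h, 0 < h ->
  exists y, x - h < y < x /\ g y < g x.
Proof.
  intros D Hd h Hh. apply is_derive_Reals in D.
  destruct (D d Hd) as [del Hdel].
  set (z := - Rmin del h / 2).
  assert (Hm : 0 < Rmin del h) by (apply Rmin_glb_lt; [apply cond_pos|lra]).
  assert (Hm1 := Rmin_l del h). assert (Hm2 := Rmin_r del h).
  assert (Hz : z <> 0) by (unfold z; lra).
  assert (Hza : Rabs z < del) by (unfold z; rewrite Rabs_left; lra).
  specialize (Hdel z Hz Hza). apply Rabs_def2 in Hdel.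
  exists (x + z). split. unfold z; lra.
  assert (0 < (g (x + z) - g x) / z) by lra.
  assert (z < 0) by (unfold z; lra).
  assert (E : g (x + z) - g x = (g (x + z) - g x) / z * z) by (field; auto).
  nra.
Qed.

Lemma deriv_cont (g : R -> R) x d : is_derive g x d -> continuity_pt g x.
Proof. intro D. apply continuity_pt_filterlim. apply (ex_derive_continuous g x). exists d; auto. Qed.

Lemma mono (Q D : R -> R) a : (forall x, a < x -> is_derive Q x (D x)) -> (forall x, a < x -> 0 <= D x) ->
  forall x y, a < x <= y -> Q x <= Q y.
Proof.
  intros HD Hp x y Hxy.
  destruct (MVT_gen Q x y D) as [c [Hc E]].
  - intros z Hz. apply HD. rewrite Rmin_left in Hz by lra. lra.
  - intros z Hz. apply (deriv_cont Q z (D z)). apply HD. rewrite Rmin_left in Hz by lra. lra.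
  - rewrite Rmin_left in Hc by lra. assert (0 <= D c) by (apply Hp; lra). nra.
Qed.

Lemma stay_above (G D : R -> R) r1 m0 : (forall x, r1 <= x -> is_derive G x (D x)) ->
  (forall x, r1 <= x -> G x < m0 -> 0 < D x) -> m0 <= G r1 -> forall x, r1 <= x -> m0 <= G x.
Proof.
  intros HD Hpos H1 x Hx. destruct (Rle_or_lt m0 (G x)) as [E|E]; auto. exfalso.
  destruct (continuity_ab_min G r1 x Hx) as [xm [Hmin Hxm]].
  { intros z Hz. apply (deriv_cont G z (D z)). apply HD; lra. }
  assert (Gm : G xm < m0) by (specialize (Hmin x ltac:(lra)); lra).
  assert (Hxm1 : r1 < xm). { destruct (Rle_lt_or_eq_dec r1 xm) as [E1|E1]; try lra. subst xm. lra. }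
  destruct (pos_deriv_left G xm (D xm) (HD xm ltac:(lra)) (Hpos xm ltac:(lra) Gm) (xm - r1) ltac:(lra))
    as [y [Hy Gy]].
  specialize (Hmin y ltac:(lra)). lra.
Qed.

Lemma L2_contra (G : R -> R) r0 r1 m0 M : r0 <= r1 -> 0 < m0 ->
  (forall x, r0 <= x -> 0 <= G x) -> (forall x, r1 <= x -> m0 <= G x) ->
  (forall R0, r0 <= R0 -> exists I, is_integral G r0 R0 I /\ I <= M) -> False.
Proof.
  intros H01 Hm0 Gp Gm HL.
  set (R0 := r1 + (Rabs M + 1) / m0).
  assert (HR : 0 < (Rabs M + 1) / m0) by (apply Rdiv_lt_0_compat; [assert (Habs := Rabs_pos M)|]; lra).
  destruct (HL R0 ltac:(unfold R0; lra)) as [I [[pr Epr] HI]].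
  assert (Hi := ex_RInt_Reals_aux_1 G r0 R0 pr). rewrite Epr in Hi.
  assert (Ex : ex_RInt G r0 R0) by (exists I; auto).
  assert (E1 : ex_RInt G r0 r1) by (apply (ex_RInt_Chasles_1 G r0 r1 R0); auto; unfold R0; lra).
  assert (E2 : ex_RInt G r1 R0) by (apply (ex_RInt_Chasles_2 G r0 r1 R0); auto; unfold R0; lra).
  assert (I12 := is_RInt_Chasles G r0 r1 R0 _ _ (RInt_correct _ _ _ E1) (RInt_correct _ _ _ E2)).
  assert (EI := is_RInt_unique _ _ _ _ I12). rewrite (is_RInt_unique _ _ _ _ Hi) in EI.
  assert (P1 : 0 <= RInt G r0 r1).
  { apply (is_RInt_ge_0 G r0 r1); auto. apply (@RInt_correct R_CompleteNormedModule); auto. intros; apply Gp; lra. }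
  assert (P2 : (R0 - r1) * m0 <= RInt G r1 R0).
  { apply (is_RInt_le (fun _ => m0) G r1 R0); auto. unfold R0; lra.
    apply (is_RInt_const r1 R0 m0). apply (@RInt_correct R_CompleteNormedModule); auto. intros; apply Gm; lra. }
  assert (E3 : (R0 - r1) * m0 = Rabs M + 1) by (unfold R0; field; lra).
  change (I = RInt G r0 r1 + RInt G r1 R0) in EI.
  assert (Habs := Rle_abs M). lra.
Qed.

Section M.
Variables (l K mu k r0 c P : R) (F Fx Fy Fxx Fxy Fyx Fyy : R -> R -> R).
Hypotheses (dFx : forall x y, derivable_pt_lim (fun a => F a y) x (Fx x y))
  (dFy : forall x y, derivable_pt_lim (fun b => F x b) y (Fy x y))
  (dFxx : forall x y, derivable_pt_lim (fun a => Fx a y) x (Fxx x y))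
  (dFxy : forall x y, derivable_pt_lim (fun b => Fx x b) y (Fxy x y))
  (dFyx : forall x y, derivable_pt_lim (fun a => Fy a y) x (Fyx x y))
  (dFyy : forall x y, derivable_pt_lim (fun b => Fy x b) y (Fyy x y))
  (cF : forall x y, continuity_2d_pt F x y)
  (cFx : forall x y, continuity_2d_pt Fx x y)
  (cFy : forall x y, continuity_2d_pt Fy x y)
  (cFxx : forall x y, continuity_2d_pt Fxx x y)
  (cFxy : forall x y, continuity_2d_pt Fxy x y)
  (cFyx : forall x y, continuity_2d_pt Fyx x y)
  (cFyy : forall x y, continuity_2d_pt Fyy x y).
Hypotheses (hl : 0 < l) (hr0 : 0 < r0) (hc : 0 < c) (hP : 0 < P) (hcP : c * P = 2 * PI)
  (hf : forall r, r0 < r -> 0 < fS l K mu r)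
  (hH : forall r, r0 <= r -> 0 < HH K mu k r)
  (hm : 0 < mm K k) (hk : 0 < k).
Variables (Ur Urr Ut Utt : R -> R -> R).
Hypotheses (hUr : forall r t, r0 < r -> derivable_pt_lim (fun a => uu F r0 c a t) r (Ur r t))
  (hUrr : forall r t, r0 < r -> derivable_pt_lim (fun a => Ur a t) r (Urr r t))
  (hUt : forall r t, r0 < r -> derivable_pt_lim (fun b => uu F r0 c r b) t (Ut r t))
  (hUtt : forall r t, r0 < r -> derivable_pt_lim (fun b => Ut r b) t (Utt r t))
  (hpde : forall r t, r0 < r ->
         - (fSp l mu r * Ur r t + fS l K mu r * Urr r t + Utt r t / fS l K mu r)
         + VSk l K mu k r * uu F r0 c r t = 0).

Local Notation u := (uu F r0 c).
Local Notation UR := (UR Fx Fy r0 c).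
Local Notation UT := (UT Fx Fy r0 c).
Local Notation UTT := (UTT Fx Fy Fxx Fxy Fyx Fyy r0 c).
Local Notation f := (fS l K mu).
Local Notation fp := (fSp l mu).
Local Notation s := (ss l K mu k).
Local Notation sp := (ssp l K mu k).
Local Notation V := (VSk l K mu k).

Let u_r' r t : r0 < r -> derivable_pt_lim (fun a => u a t) r (UR r t) := u_r F Fx Fy r0 c dFx dFy cFx cFy r t.
Let u_t' r t : derivable_pt_lim (fun b => u r b) t (UT r t) := u_t F Fx Fy r0 c dFx dFy cFx cFy r t.
Let UT_t' r t : derivable_pt_lim (fun b => UT r b) t (UTT r t) := UT_t Fx Fy Fxx Fxy Fyx Fyy r0 c dFxx dFxy dFyx dFyy cFxx cFxy cFyx cFyy r t.
Let c_u' r t : r0 < r -> continuity_2d_pt u r t := c_u F r0 c cF r t.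
Let c_UR' r t : r0 < r -> continuity_2d_pt UR r t := c_UR Fx Fy r0 c cFx cFy r t.
Let c_UT' r t : r0 < r -> continuity_2d_pt UT r t := c_UT Fx Fy r0 c cFx cFy r t.
Let c_UTT' r t : r0 < r -> continuity_2d_pt UTT r t := c_UTT Fx Fy Fxx Fxy Fyx Fyy r0 c cFx cFy cFxx cFxy cFyx cFyy r t.

Ltac nz := repeat split; try exact I; repeat apply Rmult_integral_contrapositive_currified;
  try apply R1_neq_R0; try assumption; try lra.

Lemma c1_f r : r0 < r -> continuity_pt (fun x => f x) r.
Proof. intros Hr. apply (deriv_cont _ _ (fp r)). apply fS_deriv; lra. Qed.
Lemma c1_fp r : r0 < r -> continuity_pt (fun x => fp x) r.
Proof. intros Hr. apply c1_of_deriv. unfold fSp. auto_derive. nz. Qed.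
Lemma c1_invf r : r0 < r -> continuity_pt (fun x => / f x) r.
Proof. intros Hr. apply (continuity_pt_inv (fun x => f x)). apply c1_f; auto.
  assert (H := hf r Hr). lra. Qed.
Lemma c1_s r : r0 < r -> continuity_pt (fun x => s x) r.
Proof. intros Hr. apply (deriv_cont _ _ (sp r)). apply ss_deriv; try lra.
  assert (H := hH r ltac:(lra)); lra. Qed.
Lemma c1_sp r : r0 < r -> continuity_pt (fun x => sp x) r.
Proof. intros Hr. assert (H := hH r ltac:(lra)). unfold HH, mm in H.
  assert (Hr' : r <> 0) by lra. assert (H' : 6 * mu + (k ^ 2 - 2 * K) * r <> 0) by lra.
  apply c1_of_deriv. unfold ssp, HH, mm, fS, fSp. auto_derive. nz. Qed.
Lemma c1_V r : r0 < r -> continuity_pt (fun x => V x) r.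
Proof. intros Hr. assert (H := hH r ltac:(lra)). unfold HH, mm in H.
  assert (Hr' : r <> 0) by lra. assert (H' : 6 * mu + (k ^ 2 - 2 * K) * r <> 0) by lra.
  apply c1_of_deriv. unfold VSk. cbv zeta. auto_derive. nz. Qed.
Lemma c1_const (a x : R) : continuity_pt (fun _ => a) x.
Proof. apply continuity_pt_const. intros ? ?; reflexivity. Qed.

Ltac c2step :=
  match goal with
  | |- continuity_2d_pt (fun u v => @?E u) _ _ => apply (c2_fst E)
  | |- continuity_2d_pt (fun u v => @?E v) _ _ => apply (c2_snd E)
  | |- continuity_2d_pt (fun u v => @?A u v + @?B u v) _ _ => apply (continuity_2d_pt_plus A B)
  | |- continuity_2d_pt (fun u v => @?A u v - @?B u v) _ _ => apply (continuity_2d_pt_minus A B)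
  | |- continuity_2d_pt (fun u v => @?A u v * @?B u v) _ _ => apply (continuity_2d_pt_mult A B)
  | |- continuity_2d_pt (fun u v => @?A u v / @?B u v) _ _ =>
       apply (continuity_2d_pt_ext (fun u v => A u v * / B u v)); [intros; reflexivity|]
  | |- continuity_2d_pt (fun u v => - @?A u v) _ _ => apply (continuity_2d_pt_opp A)
  end.

Ltac c2atoms := first [ apply c_u' | apply c_UR' | apply c_UT' | apply c_UTT'
   | apply c1_f | apply c1_fp | apply c1_s | apply c1_sp | apply c1_V | apply c1_invf | apply c1_const ].

Definition URR r t := (V r * u r t - fp r * UR r t - UTT r t / f r) / f r.

Lemma Ur_eq r t : r0 < r -> Ur r t = UR r t.
Proof. intros Hr. eapply uniqueness_limite. apply hUr; auto. apply u_r'; auto. Qed.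
Lemma Ut_eq r t : r0 < r -> Ut r t = UT r t.
Proof. intros Hr. eapply uniqueness_limite. apply hUt; auto. apply u_t'; auto. Qed.
Lemma Utt_eq r t : r0 < r -> Utt r t = UTT r t.
Proof. intros Hr. eapply uniqueness_limite. 2: apply UT_t'; auto.
  apply is_derive_Reals. apply (is_derive_ext (fun b => Ut r b)). intros; apply Ut_eq; auto.
  apply is_derive_Reals; auto. Qed.

Lemma URR_deriv r t : r0 < r -> derivable_pt_lim (fun a => UR a t) r (URR r t).
Proof. intros Hr. apply is_derive_Reals.
  apply (is_derive_ext_loc (fun a => Ur a t)).
  { apply (filter_imp (fun y => r0 < y)). intros; apply Ur_eq; auto. exact (open_gt r0 r Hr). }
  replace (URR r t) with (Urr r t). apply is_derive_Reals; auto.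
  assert (E := hpde r t Hr). rewrite Ur_eq, Utt_eq in E by auto.
  assert (Hf := hf r Hr). unfold URR. field_simplify_eq; [|lra].
  assert (Z: Urr r t * f r ^ 2 - (f r * V r * u r t - f r * fp r * UR r t - f r * (UTT r t / f r)) = - f r * (- (fp r * UR r t + f r * Urr r t + UTT r t / f r) + V r * u r t)) by ring.
  rewrite E in Z. replace (f r * (UTT r t / f r)) with (UTT r t) in Z by (field; lra). lra.
Qed.

Ltac c2all := repeat (first [c2atoms | c2step]).

Lemma c_URR' r t : r0 < r -> continuity_2d_pt URR r t.
Proof. intros Hr. unfold URR. c2all; lra. Qed.

Definition g2 r t := u r t * u r t.
Definition dg2 r t := 2 * (u r t * UR r t).
Definition af r t := u r t * UR r t.
Definition qf r t := f r * (u r t * UR r t) + s r * (u r t * u r t).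
Definition dqf r t := fp r * (u r t * UR r t) + f r * (UR r t * UR r t + u r t * URR r t)
   + sp r * (u r t * u r t) + s r * (2 * (u r t * UR r t)).
Definition ibp r t := UT r t * UT r t + u r t * UTT r t.

Lemma c_g2 r t : r0 < r -> continuity_2d_pt g2 r t.
Proof. intros Hr. unfold g2. c2all; lra. Qed.
Lemma c_dg2 r t : r0 < r -> continuity_2d_pt dg2 r t.
Proof. intros Hr. unfold dg2. c2all; lra. Qed.
Lemma c_af r t : r0 < r -> continuity_2d_pt af r t.
Proof. intros Hr. unfold af. c2all; lra. Qed.
Lemma c_qf r t : r0 < r -> continuity_2d_pt qf r t.
Proof. intros Hr. unfold qf. c2all; lra. Qed.
Lemma c_dqf r t : r0 < r -> continuity_2d_pt dqf r t.
Proof. intros Hr. unfold dqf. repeat (first [apply c_URR' | c2atoms | c2step]); lra. Qed.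
Lemma c_ibp r t : r0 < r -> continuity_2d_pt ibp r t.
Proof. intros Hr. unfold ibp. c2all; lra. Qed.

Lemma d_g2 r t : r0 < r -> is_derive (fun a => g2 a t) r (dg2 r t).
Proof. intros Hr. apply is_derive_Reals. unfold g2. eapply dext. apply dmult; apply u_r'; auto.
  unfold dg2; ring. Qed.
Lemma d_qf r t : r0 < r -> is_derive (fun a => qf a t) r (dqf r t).
Proof. intros Hr. apply is_derive_Reals. unfold qf. eapply dext.
  apply dplus; apply dmult.
  - apply is_derive_Reals. apply fS_deriv; lra.
  - apply dmult. apply u_r'; auto. apply URR_deriv; auto.
  - apply is_derive_Reals. apply ss_deriv; try lra. assert (H := hH r ltac:(lra)); lra.
  - apply dmult; apply u_r'; auto.
  - unfold dqf. ring.
Qed.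
Lemma d_ibp r t : r0 < r -> is_derive (fun b => u r b * UT r b) t (ibp r t).
Proof. intros Hr. apply is_derive_Reals. eapply dext. apply dmult. apply u_t'. apply UT_t'.
  unfold ibp; ring. Qed.

Lemma exRI (g : R -> R -> R) r a b : (forall t, continuity_2d_pt g r t) -> ex_RInt (fun t => g r t) a b.
Proof. intros H. apply (@ex_RInt_continuous R_CompleteNormedModule). intros z _. apply c2_to_cont_snd, H. Qed.

Definition Gt r := RInt (fun t => g2 r t) 0 P.
Definition At r := RInt (fun t => af r t) 0 P.
Definition Q r := RInt (fun t => qf r t) 0 P.
Definition DQ r := RInt (fun t => dqf r t) 0 P.

Lemma L1 r : r0 < r -> is_derive Gt r (2 * At r).
Proof. intros Hr. unfold Gt.
  replace (2 * At r) with (RInt (fun t => dg2 r t) 0 P).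
  apply (param_deriv g2 dg2 0 P r0 r); auto. intros; apply d_g2; auto.
  intros; apply c_dg2; auto. intros; apply c_g2; auto.
  unfold At, dg2. apply (RInt_scal (fun t => af r t) 0 P 2). apply exRI. intros; apply c_af; auto.
Qed.

Lemma L2 r : r0 < r -> is_derive Q r (DQ r).
Proof. intros Hr. unfold Q, DQ.
  apply (param_deriv qf dqf 0 P r0 r); auto. intros; apply d_qf; auto.
  intros; apply c_dqf; auto. intros; apply c_qf; auto.
Qed.

Lemma L3 r : r0 < r -> Q r = f r * At r + s r * Gt r.
Proof. intros Hr. unfold Q. apply is_RInt_unique.
  exact (is_RInt_plus _ _ _ _ _ _
    (is_RInt_scal _ _ _ (f r) _ (@RInt_correct R_CompleteNormedModule (fun t => af r t) 0 P (exRI af r 0 P (fun t => c_af r t Hr))))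
    (is_RInt_scal _ _ _ (s r) _ (@RInt_correct R_CompleteNormedModule (fun t => g2 r t) 0 P (exRI g2 r 0 P (fun t => c_g2 r t Hr))))).
Qed.

Lemma L5 r : r0 < r -> 0 <= Gt r.
Proof. intros Hr. unfold Gt. apply (is_RInt_ge_0 (fun t => g2 r t) 0 P); try lra.
  apply (@RInt_correct R_CompleteNormedModule). apply exRI; intros; apply c_g2; auto.
  intros; unfold g2; nra. Qed.

Lemma periodic r : u r P = u r 0 /\ UT r P = UT r 0.
Proof. unfold uu, UT, px, py. rewrite hcP, Rmult_0_r, cos_0, sin_0, cos_2PI, sin_2PI. split; reflexivity. Qed.

Lemma ibp_zero r : r0 < r -> is_RInt (fun t => ibp r t) 0 P 0.
Proof. intros Hr.
  assert (I := is_RInt_derive (fun t => u r t * UT r t) (fun t => ibp r t) 0 P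
    (fun x _ => d_ibp r x Hr) (fun x _ => c2_to_cont_snd _ _ _ (c_ibp r x Hr))).
  destruct (periodic r) as [E1 E2]. cbv beta in I. rewrite E1, E2 in I.
  rewrite minus_eq_zero in I. exact I.
Qed.

Lemma L4 r : r0 < r -> dd K mu k r * Gt r <= DQ r.
Proof. intros Hr.
  assert (Hf := hf r Hr). assert (HHr := hH r ltac:(lra)).
  assert (IG := @RInt_correct R_CompleteNormedModule (fun t => g2 r t) 0 P (exRI g2 r 0 P (fun t => c_g2 r t Hr))).
  assert (ID := @RInt_correct R_CompleteNormedModule (fun t => dqf r t) 0 P (exRI dqf r 0 P (fun t => c_dqf r t Hr))).
  assert (I1 := is_RInt_plus _ _ _ _ _ _ (is_RInt_scal _ _ _ (dd K mu k r) _ IG) (is_RInt_scal _ _ _ (- / f r) _ (ibp_zero r Hr))).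
  assert (Hle := is_RInt_le _ _ 0 P _ _ ltac:(lra) I1 ID).
  replace (dd K mu k r * Gt r) with (dd K mu k r * Gt r + - / f r * 0) by ring.
  apply Hle. intros t _. change (dd K mu k r * g2 r t + - / f r * ibp r t <= dqf r t).
  assert (E : dqf r t - (dd K mu k r * g2 r t + - / f r * ibp r t) =
     f r * (UR r t + s r * u r t / f r)^2 + UT r t * UT r t / f r).
  { rewrite <- (riccati l K mu k r) by lra. unfold dqf, g2, ibp, URR. field. lra. }
  assert (0 <= f r * (UR r t + s r * u r t / f r)^2) by (apply Rmult_le_pos; [lra|apply pow2_ge_0]).
  assert (0 <= UT r t * UT r t / f r) by (apply Rle_mult_inv_pos; nra).
  lra.
Qed.

Lemma L7 r : r0 < r -> Gt r = 0 -> forall t, 0 < t < P -> u r t = 0.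
Proof. intros Hr E t Ht.
  assert (I := @RInt_correct R_CompleteNormedModule (fun t => g2 r t) 0 P (exRI g2 r 0 P (fun t => c_g2 r t Hr))).
  change (is_RInt (fun t => g2 r t) 0 P (Gt r)) in I. rewrite E in I.
  assert (Z := RInt_zero_pos (fun t => g2 r t) 0 P t Ht (fun t => c2_to_cont_snd _ _ _ (c_g2 r t Hr))
     (fun t _ => ltac:(unfold g2; nra)) I).
  unfold g2 in Z. nra.
Qed.

Lemma bound_near (G : R -> R -> R) : (forall x y, continuity_2d_pt G x y) ->
  exists d, 0 < d /\ forall x y, Rabs x < d -> Rabs y < d -> Rabs (G x y) <= Rabs (G 0 0) + 1.
Proof. intros CG. destruct (CG 0 0 (mkposreal 1 ltac:(lra))) as [d Hd].
  exists d. split. apply cond_pos. intros x y Hx Hy.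
  assert (H := Hd x y ltac:(rewrite Rminus_0_r; auto) ltac:(rewrite Rminus_0_r; auto)). simpl in H.
  assert (Rabs (G x y) <= Rabs (G x y - G 0 0) + Rabs (G 0 0)).
  { replace (G x y) with ((G x y - G 0 0) + G 0 0) at 1 by ring. apply Rabs_triang. }
  lra.
Qed.

Hypothesis hnear : exists C, 0 < C /\ forall r, r0 < r <= r0 + 1 ->
  f r <= C * (r - r0) /\ Rabs (s r) <= C * (r - r0).

Lemma L6 q r : 0 < q -> r0 < r -> exists r', r0 < r' <= r /\ - q < Q r'.
Proof.
  intros Hq Hr. destruct hnear as [C [HC Hn]].
  destruct (bound_near F cF) as [d1 [Hd1 B1]].
  destruct (bound_near Fx cFx) as [d2 [Hd2 B2]].
  destruct (bound_near Fy cFy) as [d3 [Hd3 B3]].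
  set (M1 := Rabs (F 0 0) + 1). set (M2 := Rabs (Fx 0 0) + 1 + (Rabs (Fy 0 0) + 1)).
  assert (HM1 : 0 < M1) by (unfold M1; assert (Habs := Rabs_pos (F 0 0)); lra).
  assert (HM2 : 0 < M2) by (unfold M2; assert (Habs := Rabs_pos (Fx 0 0)); assert (Habs' := Rabs_pos (Fy 0 0)); lra).
  set (Kb := C * (M1 * M2 + M1 * M1) + 1).
  assert (HKb : 0 < Kb) by (unfold Kb; assert (0 < C * (M1 * M2 + M1 * M1)) by (apply Rmult_lt_0_compat; nra); lra).
  set (d := Rmin d1 (Rmin d2 d3)).
  assert (Hd : 0 < d) by (unfold d; repeat apply Rmin_glb_lt; lra).
  assert (Hdd : d <= d1 /\ d <= d2 /\ d <= d3).
  { unfold d. assert (H1 := Rmin_l d1 (Rmin d2 d3)). assert (H2 := Rmin_r d1 (Rmin d2 d3)).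
    assert (H3 := Rmin_l d2 d3). assert (H4 := Rmin_r d2 d3). lra. }
  assert (Hsq : 0 < sqrt (r - r0)) by (apply sqrt_lt_R0; lra).
  assert (Hqq : 0 < q / (2 * P * Kb)) by (apply Rdiv_lt_0_compat; [lra| apply Rmult_lt_0_compat; lra]).
  set (rho := Rmin (Rmin (d / 2) (1 / 2)) (Rmin (sqrt (r - r0) / 2) (q / (2 * P * Kb)))).
  assert (Hrho : 0 < rho) by (unfold rho; repeat apply Rmin_glb_lt; lra).
  assert (Hrho2 : rho <= d / 2 /\ rho <= 1 / 2 /\ rho <= sqrt (r - r0) / 2 /\ rho <= q / (2 * P * Kb)).
  { unfold rho. assert (H1 := Rmin_l (Rmin (d / 2) (1 / 2)) (Rmin (sqrt (r - r0) / 2) (q / (2 * P * Kb)))).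
    assert (H2 := Rmin_r (Rmin (d / 2) (1 / 2)) (Rmin (sqrt (r - r0) / 2) (q / (2 * P * Kb)))).
    assert (H3 := Rmin_l (d / 2) (1 / 2)). assert (H4 := Rmin_r (d / 2) (1 / 2)).
    assert (H5 := Rmin_l (sqrt (r - r0) / 2) (q / (2 * P * Kb))). assert (H6 := Rmin_r (sqrt (r - r0) / 2) (q / (2 * P * Kb))).
    lra. }
  destruct Hrho2 as [R1 [R2 [R3 R4]]].
  set (r' := r0 + rho ^ 2).
  assert (Hr'1 : r0 < r') by (unfold r'; assert (0 < rho^2) by (apply pow_lt; lra); lra).
  assert (Hr'2 : r' <= r).
  { unfold r'. assert (E := sqrt_sqrt (r - r0) ltac:(lra)). nra. }
  assert (Hsr : sqrt (r' - r0) = rho) by (unfold r'; replace (r0 + rho ^ 2 - r0) with (rho ^ 2) by ring; apply sqrt_pow2; lra).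
  destruct (Hn r' ltac:(split; [lra|unfold r'; nra])) as [Hf1 Hs1].
  replace (r' - r0) with (rho ^ 2) in Hf1, Hs1 by (unfold r'; ring).
  assert (Hfp := hf r' Hr'1).
  exists r'. split. lra.
  assert (Pt : forall t, 0 <= t <= P -> Rabs (qf r' t) <= rho * Kb).
  { intros t _. unfold qf, uu, UR, px, py. rewrite Hsr.
    assert (Hc1 := COS_bound (c * t)). assert (Hs2 := SIN_bound (c * t)).
    assert (Ex : Rabs (rho * cos (c * t)) < d).
    { rewrite Rabs_mult, (Rabs_right rho) by lra. assert (Rabs (cos (c * t)) <= 1) by (apply Rabs_le; lra). nra. }
    assert (Ey : Rabs (rho * sin (c * t)) < d).
    { rewrite Rabs_mult, (Rabs_right rho) by lra. assert (Rabs (sin (c * t)) <= 1) by (apply Rabs_le; lra). nra. }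
    assert (A1 := B1 (rho * cos (c * t)) (rho * sin (c * t)) ltac:(lra) ltac:(lra)).
    assert (A2 := B2 (rho * cos (c * t)) (rho * sin (c * t)) ltac:(lra) ltac:(lra)).
    assert (A3 := B3 (rho * cos (c * t)) (rho * sin (c * t)) ltac:(lra) ltac:(lra)).
    set (X := rho * cos (c * t)) in *. set (Y := rho * sin (c * t)) in *.
    assert (HN : Rabs (Fx X Y * cos (c * t) + Fy X Y * sin (c * t)) <= M2).
    { eapply Rle_trans. apply Rabs_triang. rewrite !Rabs_mult.
      assert (Rabs (cos (c * t)) <= 1) by (apply Rabs_le; lra).
      assert (Rabs (sin (c * t)) <= 1) by (apply Rabs_le; lra).
      assert (Habs := Rabs_pos (Fx X Y)). assert (Habs' := Rabs_pos (Fy X Y)).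
      assert (Habs2 := Rabs_pos (cos (c * t))). assert (Habs3 := Rabs_pos (sin (c * t))).
      unfold M2. nra. }
    set (N := Fx X Y * cos (c * t) + Fy X Y * sin (c * t)) in *.
    set (A := F X Y) in *. fold M1 in A1.
    replace (f r' * (A * (N / (2 * rho))) + s r' * (A * A)) with
      ((f r' / rho) * (A * N) / 2 + s r' * (A * A)) by (field; lra).
    assert (Hw : f r' / rho <= C * rho).
    { apply (Rmult_le_reg_r rho); auto. replace (f r' / rho * rho) with (f r') by (field; lra). nra. }
    assert (Hw0 : 0 < f r' / rho) by (apply Rdiv_lt_0_compat; lra).
    assert (HAN : Rabs (A * N) <= M1 * M2).
    { rewrite Rabs_mult. apply Rmult_le_compat; auto; apply Rabs_pos. }
    assert (HAA : Rabs (A * A) <= M1 * M1).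
    { rewrite Rabs_mult. apply Rmult_le_compat; auto; apply Rabs_pos. }
    eapply Rle_trans. apply Rabs_triang.
    assert (T1 : Rabs (f r' / rho * (A * N) / 2) <= C * rho * (M1 * M2) / 2).
    { change (Rabs (f r' / rho * (A * N) * / 2) <= C * rho * (M1 * M2) * / 2).
      rewrite Rabs_mult, Rabs_mult. rewrite (Rabs_right (f r' / rho)) by lra.
      rewrite (Rabs_right (/ 2)) by lra. apply Rmult_le_compat_r. lra.
      apply Rmult_le_compat; try lra; apply Rabs_pos. }
    assert (T2 : Rabs (s r' * (A * A)) <= C * rho * (M1 * M1)).
    { rewrite Rabs_mult. apply Rmult_le_compat; try apply Rabs_pos; auto. nra. }
    unfold Kb. assert (0 < C * rho * (M1 * M2)) by (apply Rmult_lt_0_compat; nra).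
    nra. }
  assert (HQ := norm_RInt_le_const (fun t => qf r' t) 0 P (Q r') (rho * Kb) ltac:(lra) Pt
      (@RInt_correct R_CompleteNormedModule (fun t => qf r' t) 0 P (exRI qf r' 0 P (fun t => c_qf r' t Hr'1)))).
  change (Rabs (Q r') <= (P - 0) * (rho * Kb)) in HQ.
  assert (P * (rho * Kb) <= q / 2).
  { replace (q / 2) with (P * (q / (2 * P * Kb)) * Kb) by (field; lra).
    assert (P * rho <= P * (q / (2 * P * Kb))) by (apply Rmult_le_compat_l; lra). nra. }
  assert (Habs := Rabs_maj2 (Q r')). lra.
Qed.

Lemma dd_pos r : r0 < r -> 0 < dd K mu k r.
Proof. intros Hr. unfold dd. assert (H := hH r ltac:(lra)).
  apply Rdiv_lt_0_compat. apply Rmult_lt_0_compat; auto. apply pow_lt; auto.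
  apply Rmult_lt_0_compat; lra. Qed.

Lemma DQ_nonneg r : r0 < r -> 0 <= DQ r.
Proof. intros Hr. assert (H1 := L4 r Hr). assert (H2 := L5 r Hr). assert (H3 := dd_pos r Hr). nra. Qed.

Lemma Qmono x y : r0 < x <= y -> Q x <= Q y.
Proof. apply (mono Q DQ r0). apply L2. apply DQ_nonneg. Qed.

Lemma Qge r : r0 < r -> 0 <= Q r.
Proof. intros Hr. destruct (Rle_or_lt 0 (Q r)) as [E|E]; auto. exfalso.
  destruct (L6 (- Q r) r ltac:(lra) Hr) as [r' [Hr' Hq]].
  assert (HH' := Qmono r' r ltac:(lra)). lra. Qed.

Lemma At_zero r : r0 < r -> Gt r = 0 -> At r = 0.
Proof. intros Hr E. unfold At.
  rewrite (RInt_ext (fun t => af r t) (fun _ => 0) 0 P).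
  - rewrite RInt_const. change ((P - 0) * 0 = 0). ring.
  - intros x Hx. rewrite Rmin_left, Rmax_right in Hx by lra. unfold af. rewrite (L7 r Hr E x Hx). apply Rmult_0_l.
Qed.

Hypothesis hsb : exists b, 0 < b /\ forall r, r0 < r -> s r <= b.
Hypothesis hL2 : exists G : R -> R, (forall r, r0 <= r -> 0 <= G r) /\ (forall r, r0 < r -> G r = Gt r) /\
  exists M, forall R0, r0 <= R0 -> exists I, is_integral G r0 R0 I /\ I <= M.

Lemma Qle r1 : r0 < r1 -> Q r1 <= 0.
Proof. intros Hr1. destruct (Rle_or_lt (Q r1) 0) as [E|E]; auto. exfalso.
  set (q := Q r1) in *. destruct hsb as [b [Hb Hsb]].
  set (c0 := q / (2 * b)).
  assert (Hc0 : 0 < c0) by (apply Rdiv_lt_0_compat; lra).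
  assert (key : forall x, r1 <= x -> Gt x < c0 -> 0 < 2 * At x).
  { intros x Hx HG. assert (Hx0 : r0 < x) by lra.
    assert (Qx := Qmono r1 x ltac:(lra)). rewrite (L3 x Hx0) in Qx.
    assert (G0 := L5 x Hx0). assert (Sx := Hsb x Hx0).
    assert (s x * Gt x <= b * Gt x) by (apply Rmult_le_compat_r; auto).
    assert (b * Gt x < q / 2). { assert (b * Gt x < b * c0) by (apply Rmult_lt_compat_l; auto).
      unfold c0 in H0. replace (b * (q / (2 * b))) with (q / 2) in H0 by (field; lra). lra. }
    assert (Hfx := hf x Hx0). fold q in Qx.
    assert (0 < f x * At x) by lra.
    assert (0 < At x). { destruct (Rle_or_lt (At x) 0); auto. nra. } lra. }
  assert (G1 : 0 < Gt r1).
  { destruct (Rle_lt_or_eq_dec 0 (Gt r1) (L5 r1 Hr1)) as [H|H]; auto. exfalso.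
    assert (Z : @eq R q 0). { unfold q. rewrite (L3 r1 Hr1), (At_zero r1 Hr1 (eq_sym H)), <- H. change (@eq R (f r1 * 0 + s r1 * 0) 0). ring. } lra. }
  set (m0 := Rmin c0 (Gt r1)).
  assert (Hm0 : 0 < m0) by (apply Rmin_glb_lt; lra).
  assert (Hm0c : m0 <= c0 /\ m0 <= Gt r1) by (split; [apply Rmin_l|apply Rmin_r]).
  assert (SA := stay_above Gt (fun x => 2 * At x) r1 m0 (fun x Hx => L1 x ltac:(lra))
       (fun x Hx HG => key x Hx ltac:(lra)) (proj2 Hm0c)).
  destruct hL2 as [G [Gp [GE [M HM]]]].
  apply (L2_contra G r0 r1 m0 M); auto. lra.
  intros x Hx. rewrite GE by lra. apply SA; auto.
Qed.

Lemma Gt_zero r : r0 < r -> Gt r = 0.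
Proof. intros Hr.
  assert (Qz : forall x, r0 < x -> @eq R (Q x) 0) by (intros x Hx; assert (A1 := Qge x Hx); assert (A2 := Qle x Hx); lra).
  assert (D0 : is_derive Q r 0).
  { apply (is_derive_ext_loc (fun _ => 0)).
    apply (filter_imp (fun y => r0 < y)). intros y Hy; rewrite Qz; auto. exact (open_gt r0 r Hr).
    apply (is_derive_const 0 r). }
  assert (E : DQ r = 0).
  { rewrite <- (is_derive_unique Q r (DQ r) (L2 r Hr)). apply is_derive_unique; auto. }
  assert (H1 := L4 r Hr). assert (H2 := L5 r Hr). assert (H3 := dd_pos r Hr). nra.
Qed.

End M.

Theorem mainTheorem7 (l mu K r0 k : R)
  (hl : 0 < l)
  (hK : K = -1 \/ K = 0 \/ K = 1)
  (hmu01 : K = 0 \/ K = 1 -> 0 < mu)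
  (hmum1 : K = -1 -> - l / (3 * sqrt 3) < mu)
  (hr0pos : 0 < r0)
  (hr0zero : fS l K mu r0 = 0)
  (hr0max : forall r, 0 < r -> fS l K mu r = 0 -> r <= r0)
  (hk : 0 < k)
  (hk2 : Rmax 0 (2 * K) < k ^ 2)
  (F : R -> R -> R)
  (hF : smooth2 F)
  (* u(r,t) := F in the coordinates (r,t), t of period 4 pi / f'(r0) *)
  (hL2 : exists G : R -> R,
      (forall r, r0 <= r ->
         is_integral (fun t => (polar_rt r0 (fSp l mu r0 / 2) F r t) ^ 2)
                     0 (4 * PI / fSp l mu r0) (G r)) /\
      exists M, forall R0, r0 <= R0 -> exists I, is_integral G r0 R0 I /\ I <= M)
  (heq : exists Ur Urr Ut Utt : R -> R -> R,
      let u := polar_rt r0 (fSp l mu r0 / 2) F in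
      (forall r t, r0 < r -> derivable_pt_lim (fun a => u a t) r (Ur r t)) /\
      (forall r t, r0 < r -> derivable_pt_lim (fun a => Ur a t) r (Urr r t)) /\
      (forall r t, r0 < r -> derivable_pt_lim (fun b => u r b) t (Ut r t)) /\
      (forall r t, r0 < r -> derivable_pt_lim (fun b => Ut r b) t (Utt r t)) /\
      (* - Delta u + V u = 0, Delta u = d_r (f d_r u) + f^{-1} d_t^2 u *)
      (forall r t, r0 < r ->
         - (fSp l mu r * Ur r t + fS l K mu r * Urr r t
            + Utt r t / fS l K mu r)
         + VSk l K mu k r * u r t = 0)) :
  forall x y, F x y = 0.
Proof.
  destruct (hF 2%nat) as [cF0 [Fx [Fy [dFx [dFy [CFx CFy]]]]]].
  destruct CFx as [cFx0 [Fxx [Fxy [dFxx [dFxy [[cFxx0 _] [cFxy0 _]]]]]]].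
  destruct CFy as [cFy0 [Fyx [Fyy [dFyx [dFyy [[cFyx0 _] [cFyy0 _]]]]]]].
  assert (cF := cont2_2d F cF0). assert (cFx := cont2_2d Fx cFx0). assert (cFy := cont2_2d Fy cFy0).
  assert (cFxx := cont2_2d Fxx cFxx0). assert (cFxy := cont2_2d Fxy cFxy0).
  assert (cFyx := cont2_2d Fyx cFyx0). assert (cFyy := cont2_2d Fyy cFyy0).
  assert (Hfp : 0 < fSp l mu r0) by (apply (c_pos l mu K r0 k); auto).
  set (c := fSp l mu r0 / 2).
  set (P := 4 * PI / fSp l mu r0).
  assert (hc : 0 < c) by (unfold c; lra).
  assert (hP : 0 < P) by (unfold P; apply Rdiv_lt_0_compat; [assert (Hpi := PI_RGT_0); lra | lra]).
  assert (hcP : c * P = 2 * PI) by (unfold c, P; field; lra).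
  assert (hf : forall r, r0 < r -> 0 < fS l K mu r) by (intros; apply (f_pos l mu K r0 k); auto).
  assert (hH : forall r, r0 <= r -> 0 < HH K mu k r) by (intros; apply (H_pos l mu K r0 k); auto).
  assert (hm : 0 < mm K k) by (unfold mm; assert (2 * K < k ^ 2) by (apply (m_pos K k); auto); lra).
  assert (hnear := near_bound l mu K r0 k hl hK hmu01 hmum1 hr0pos hr0zero hr0max hk2).
  assert (hsb := s_bound l mu K r0 k hl hK hmu01 hmum1 hr0pos hr0zero hr0max hk2). 
  destruct heq as [Ur [Urr [Ut [Utt Heq]]]]. cbv zeta in Heq.
  destruct Heq as [hUr [hUrr [hUt [hUtt hpde]]]].
  destruct hL2 as [G [HG HM]].
  assert (hL2' : exists G : R -> R, (forall r, r0 <= r -> 0 <= G r) /\ (forall r, r0 < r -> G r = Gt r0 c P F r) /\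
      exists M, forall R0, r0 <= R0 -> exists I, is_integral G r0 R0 I /\ I <= M).
  { exists G. split; [|split; auto].
    - intros r Hr. destruct (HG r Hr) as [pr Epr]. assert (I := ex_RInt_Reals_aux_1 _ _ _ pr). rewrite Epr in I.
      apply (is_RInt_ge_0 _ 0 P _ (Rlt_le _ _ hP) I). intros; apply pow2_ge_0.
    - intros r Hr. destruct (HG r (Rlt_le _ _ Hr)) as [pr Epr]. assert (I := ex_RInt_Reals_aux_1 _ _ _ pr). rewrite Epr in I.
      unfold Gt. symmetry. apply is_RInt_unique.
      apply (is_RInt_ext (fun t => polar_rt r0 c F r t ^ 2)). intros; unfold g2, polar_rt, uu, px, py; simpl; rewrite Rmult_1_r; reflexivity. exact I. }
  assert (Gz := Gt_zero l K mu k r0 c P F Fx Fy Fxx Fxy Fyx Fyy dFx dFy dFxx dFxy dFyx dFyy cF cFx cFy cFxx cFxy cFyx cFyy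
     hl hr0pos hP hcP hf hH hm hk Ur Urr Ut Utt hUr hUrr hUt hUtt hpde hnear hsb hL2').
  assert (Hyn : forall x y, y <> 0 -> F x y = 0).
  { intros x y Hy. destruct (angle x y Hy) as [rho [th [Hrho [Hth [Ex Ey]]]]].
    set (r := r0 + rho^2). set (t := th / c).
    assert (Hr : r0 < r) by (unfold r; assert (0 < rho^2) by (apply pow_lt; lra); lra).
    assert (HPc : P = 2 * PI / c) by (apply (Rmult_eq_reg_l c); [rewrite hcP; field|]; lra).
    assert (Ht : 0 < t < P).
    { unfold t. rewrite HPc. split. apply Rdiv_lt_0_compat; lra.
      unfold Rdiv. apply Rmult_lt_compat_r. apply Rinv_0_lt_compat; lra. lra. }
    assert (U := L7 r0 c P F cF r Hr (Gz r Hr) t Ht).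
    unfold uu, px, py in U.
    replace (sqrt (r - r0)) with rho in U by (unfold r; replace (r0 + rho ^ 2 - r0) with (rho ^ 2) by ring; rewrite sqrt_pow2; lra).
    replace (c * t) with th in U by (unfold t; field; lra).
    rewrite Ex, Ey. exact U. }
  intros x y. destruct (Req_dec y 0) as [Hy|Hy]; [|apply Hyn; auto].
  subst y. destruct (Req_dec (F x 0) 0) as [E|E]; auto. exfalso.
  assert (He : 0 < Rabs (F x 0)) by (apply Rabs_pos_lt; auto).
  destruct (cF x 0 (mkposreal _ He)) as [d Hd].
  assert (Hd0 := cond_pos d).
  assert (A := Hd x (d / 2) ltac:(rewrite Rminus_eq_0, Rabs_R0; lra) ltac:(rewrite Rminus_0_r, Rabs_right; lra)).
  simpl in A. rewrite (Hyn x (d / 2)) in A by lra. rewrite Rminus_0_l, Rabs_Ropp in A. lra.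
Qed.
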